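(* Consider the system \[ \begin{aligned} \dot X_1^1&=\bigl(\mu_1(S_1^{in}-k_1X_1^1)-D_1\bigr)X_1^1,\quad \dot X_2^1=\bigl(\mu_2(S_2^{in}+k_2X_1^1-k_3X_2^1)-D_1\bigr)X_2^1,\\ \dot X_1^2&=D_2(X_1^1-X_1^2)+\mu_1(S_1^{in}-k_1X_1^2)X_1^2,\quad \dot X_2^2=D_2(X_2^1-X_2^2)+\mu_2(S_2^{in}+k_2X_1^2-k_3X_2^2)X_2^2, \end{aligned} \] with $\mu_1,\mu_2$ satisfying (H1), (H2), and assume the existence conditions of the respective steady state types hold. Then: \begin{itemize} \item The steady states of the types $\mathcal E_{00}^{kl}$, $\mathcal E_{10}^{1l}$ ($k=0,1$, $l=0,1,2$) and $\mathcal E_{01}^{01}$ are unique. \item There exists at least one steady state of the type $\mathcal E_{02}^{01}$; generically, the system has an odd number of steady states of the type $\mathcal E_{02}^{01}$. \item For $i=1,2$: if $X_2^{1*}>x_2^m$, the steady states of the types $\mathcal E_{0i}^{11}$ and $\mathcal E_{1i}^{11}$ are unique; if $X_2^{1*}<x_2^m$, there exists at least one steady state of the type $\mathcal E_{0i}^{11}$ and of the type $\mathcal E_{1i}^{11}$, and generically the system has an odd number of steady states of each of these types. Here $X_2^{1*}$ and $X_1^{2*}$ are the $X_2^1$- and $X_1^2$-components of the steady state considered and $x_2^m=(S_2^{in}+k_2X_1^{2*}-S_2^m)/k_3$. \end{itemize}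
   Context: Parameters $k_1,k_2,k_3>0$, $D>0$, $r\in(0,1)$, $r_1=r$, $r_2=1-r$, $D_1=D/r_1$, $D_2=D/r_2$, $S_1^{in},S_2^{in}\ge0$. (H1): $\mu_1\in C^1(\mathbb R_+)$, $\mu_1(0)=0$, $\mu_1(+\infty)=m_1$, $\mu_1'>0$ on $(0,\infty)$. (H2): $\mu_2\in C^1(\mathbb R_+)$, $\mu_2(0)=0$, $\mu_2(+\infty)=0$, and there is $S_2^m>0$ with $\mu_2'>0$ on $(0,S_2^m)$, $\mu_2'<0$ on $(S_2^m,\infty)$. For $i=1,2$: $\lambda_1^i$ solves $\mu_1(S)=D_i$ ($+\infty$ if $D\ge r_im_1$); $\lambda_2^{i1}\le\lambda_2^{i2}$ solve $\mu_2(S)=D_i$ ($+\infty$ if $D>r_i\mu_2(S_2^m)$); $F_{ij}=\lambda_1^i+\frac{k_1}{k_2}(\lambda_2^{ij}-S_2^{in})$. Steady state types (for $i=1,2$) with existence conditions: $\mathcal E_{00}^{00}=(0,0,0,0)$ (always); $\mathcal E_{00}^{0i}=(0,0,0,(S_2^{in}-\lambda_2^{2i})/k_3)$ ($S_2^{in}>\lambda_2^{2i}$); $\mathcal E_{00}^{10}=(0,0,(S_1^{in}-\lambda_1^2)/k_1,0)$ ($S_1^{in}>\lambda_1^2$); $\mathcal E_{00}^{1i}=(0,0,(S_1^{in}-\lambda_1^2)/k_1,k_2(S_1^{in}-F_{2i})/(k_1k_3))$ ($S_1^{in}>\max(\lambda_1^2,F_{2i})$); $\mathcal E_{10}^{10}=((S_1^{in}-\lambda_1^1)/k_1,0,X_1^{2*},0)$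 and $\mathcal E_{10}^{1i}=((S_1^{in}-\lambda_1^1)/k_1,0,X_1^{2*},(S_2^{in}+k_2X_1^{2*}-\lambda_2^{2i})/k_3)$, where $X_1^{2*}$ solves $\mu_1(S_1^{in}-k_1x)=D_2(x-X_1^{1*})/x$ with $X_1^{1*}=(S_1^{in}-\lambda_1^1)/k_1$ (exist iff $S_1^{in}>\lambda_1^1$, resp. additionally $S_2^{in}+k_2X_1^{2*}>\lambda_2^{2i}$); $\mathcal E_{0i}^{01}=(0,X_2^{1*},0,X_2^{2*})$ with $X_2^{1*}=(S_2^{in}-\lambda_2^{1i})/k_3$ and $X_2^{2*}$ a solution of $\mu_2(S_2^{in}-k_3x)=D_2(x-X_2^{1*})/x$ ($S_2^{in}>\lambda_2^{1i}$); $\mathcal E_{0i}^{11}=(0,X_2^{1*},X_1^{2*},X_2^{2*})$ with $X_2^{1*}=(S_2^{in}-\lambda_2^{1i})/k_3$, $X_1^{2*}=(S_1^{in}-\lambda_1^2)/k_1$, $X_2^{2*}$ a solution of $\mu_2(S_2^{in}+k_2X_1^{2*}-k_3x)=D_2(x-X_2^{1*})/x$ ($S_1^{in}>\lambda_1^2$, $S_2^{in}>\lambda_2^{1i}$); $\mathcal E_{1i}^{11}=(X_1^{1*},X_2^{1*},X_1^{2*},X_2^{2*})$ with $X_1^{1*}=(S_1^{in}-\lambda_1^1)/k_1$, $X_2^{1*}=k_2(S_1^{in}-F_{1i})/(k_1k_3)$, $X_1^{2*}$ solving $\mu_1(S_1^{in}-k_1x)=D_2(x-X_1^{1*})/x$,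 $X_2^{2*}$ a solution of $\mu_2(S_2^{in}+k_2X_1^{2*}-k_3x)=D_2(x-X_2^{1*})/x$ ($S_1^{in}>\max(\lambda_1^1,F_{1i})$). ''Type'' means the family of all steady states of the given form. *)

(* Defs.v *)
From Stdlib Require Import Reals Lra List ClassicalEpsilon.
From Coquelicot Require Import Coquelicot.
Open Scope R_scope.

Record params := Params {
  k1 : R; k2 : R; k3 : R; Dil : R; rr : R; S1in : R; S2in : R;
  mu1 : R -> R; mu2 : R -> R }.

(** r_1 = r, r_2 = 1 - r, D_1 = D/r_1, D_2 = D/r_2. *)
Definition D1 (p : params) : R := Dil p / rr p.
Definition D2 (p : params) : R := Dil p / (1 - rr p).

Definition params_ok (p : params) : Prop :=
  0 < k1 p /\ 0 < k2 p /\ 0 < k3 p /\ 0 < Dil p /\ 0 < rr p /\ rr p < 1 /\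
  0 <= S1in p /\ 0 <= S2in p.

(** f is C^1 on R_+ = [0, +oo): a derivative df exists on (0,+oo), df is
    continuous on (0,+oo), and f, df are right-continuous at 0 (so that the
    right derivative at 0 exists and equals df 0). *)
Definition C1_Rplus (f : R -> R) : Prop :=
  exists df : R -> R,
    (forall x, 0 < x -> is_derive f x (df x)) /\
    (forall x, 0 < x -> continuous df x) /\
    filterlim f (at_right 0) (locally (f 0)) /\
    filterlim df (at_right 0) (locally (df 0)).

Definition H1 (mu : R -> R) (m1 : R) : Prop :=
  C1_Rplus mu /\ mu 0 = 0 /\ is_lim mu p_infty (Finite m1) /\
  (forall x, 0 < x -> Derive mu x > 0).

Definition H2 (mu : R -> R) (S2m : R) : Prop :=
  C1_Rplus mu /\ mu 0 = 0 /\ is_lim mu p_infty (Finite 0) /\ 0 < S2m /\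
  (forall x, 0 < x < S2m -> Derive mu x > 0) /\
  (forall x, S2m < x -> Derive mu x < 0).

Definition steady (p : params) (x11 x21 x12 x22 : R) : Prop :=
  (mu1 p (S1in p - k1 p * x11) - D1 p) * x11 = 0 /\
  (mu2 p (S2in p + k2 p * x11 - k3 p * x21) - D1 p) * x21 = 0 /\
  D2 p * (x11 - x12) + mu1 p (S1in p - k1 p * x12) * x12 = 0 /\
  D2 p * (x21 - x22) + mu2 p (S2in p + k2 p * x12 - k3 p * x22) * x22 = 0.

(** State space: nonnegative biomasses and nonnegative substrate
    concentrations (the arguments of mu1, mu2, which are defined on R_+). *)
Definition in_domain (p : params) (x11 x21 x12 x22 : R) : Prop :=
  0 <= x11 /\ 0 <= x21 /\ 0 <= x12 /\ 0 <= x22 /\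
  0 <= S1in p - k1 p * x11 /\ 0 <= S2in p + k2 p * x11 - k3 p * x21 /\
  0 <= S1in p - k1 p * x12 /\ 0 <= S2in p + k2 p * x12 - k3 p * x22.

(** Break-even concentrations.  lambda_1 solves mu1(S) = Di; it is finite
    iff such a solution exists (otherwise it is +oo, encoded by the
    predicate [lam1_fin] being false). *)
Definition lam1_fin (p : params) (Di : R) : Prop :=
  exists S, 0 <= S /\ mu1 p S = Di.
Definition lam1 (p : params) (Di : R) : R :=
  epsilon (inhabits 0) (fun S => 0 <= S /\ mu1 p S = Di).

Inductive idx := i1 | i2.

(** lambda_2^{.1} <= lambda_2^{.2}: the smallest / largest solution of
    mu2(S) = Di ( +oo, i.e. [lam2_fin] false, if there is none). *)
Definition lam2_fin (p : params) (Di : R) : Prop :=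
  exists S, 0 <= S /\ mu2 p S = Di.
Definition lam2 (p : params) (j : idx) (Di : R) : R :=
  match j with
  | i1 => epsilon (inhabits 0) (fun S => 0 <= S /\ mu2 p S = Di /\
             forall S', 0 <= S' -> mu2 p S' = Di -> S <= S')
  | i2 => epsilon (inhabits 0) (fun S => 0 <= S /\ mu2 p S = Di /\
             forall S', 0 <= S' -> mu2 p S' = Di -> S' <= S)
  end.

Definition Dlev (p : params) (l : idx) : R :=
  match l with i1 => D1 p | i2 => D2 p end.

Definition F (p : params) (l j : idx) : R :=
  lam1 p (Dlev p l) + k1 p / k2 p * (lam2 p j (Dlev p l) - S2in p).

Definition X11s (p : params) : R := (S1in p - lam1 p (D1 p)) / k1 p.

Definition X12_eq (p : params) (x : R) : Prop :=
  0 < x /\ 0 <= S1in p - k1 p * x /\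
  mu1 p (S1in p - k1 p * x) = D2 p * (x - X11s p) / x.

Definition X12s_10 (p : params) : R := epsilon (inhabits 0) (X12_eq p).

Definition X22_eq (p : params) (b c x : R) : Prop :=
  0 < x /\ mu2 p (S2in p + k2 p * c - k3 p * x) = D2 p * (x - b) / x.

(** Steady state types.  Naming: E_{ab}^{cd}; an index argument i gives the
    position that ranges over {1,2}. *)
Inductive stype :=
| E00_00
| E00_0 (i : idx)
| E00_10
| E00_1 (i : idx)
| E10_10
| E10_1 (i : idx)
| E0_01 (i : idx)
| E0_11 (i : idx)
| E1_11 (i : idx).

(** Existence conditions of the types (lambda = +oo makes them false). *)
Definition exist_cond (p : params) (T : stype) : Prop :=
  match T with
  | E00_00 => True
  | E00_0 i => lam2_fin p (D2 p) /\ S2in p > lam2 p i (D2 p)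
  | E00_10 => lam1_fin p (D2 p) /\ S1in p > lam1 p (D2 p)
  | E00_1 i => lam1_fin p (D2 p) /\ lam2_fin p (D2 p) /\
               S1in p > lam1 p (D2 p) /\ S1in p > F p i2 i
  | E10_10 => lam1_fin p (D1 p) /\ S1in p > lam1 p (D1 p)
  | E10_1 i => lam1_fin p (D1 p) /\ S1in p > lam1 p (D1 p) /\
               lam2_fin p (D2 p) /\
               S2in p + k2 p * X12s_10 p > lam2 p i (D2 p)
  | E0_01 i => lam2_fin p (D1 p) /\ S2in p > lam2 p i (D1 p)
  | E0_11 i => lam1_fin p (D2 p) /\ S1in p > lam1 p (D2 p) /\
               lam2_fin p (D1 p) /\ S2in p > lam2 p i (D1 p)
  | E1_11 i => lam1_fin p (D1 p) /\ lam2_fin p (D1 p) /\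
               S1in p > lam1 p (D1 p) /\ S1in p > F p i1 i
  end.

Definition form (p : params) (T : stype) (a b c d : R) : Prop :=
  match T with
  | E00_00 => a = 0 /\ b = 0 /\ c = 0 /\ d = 0
  | E00_0 i => a = 0 /\ b = 0 /\ c = 0 /\ d = (S2in p - lam2 p i (D2 p)) / k3 p
  | E00_10 => a = 0 /\ b = 0 /\ c = (S1in p - lam1 p (D2 p)) / k1 p /\ d = 0
  | E00_1 i => a = 0 /\ b = 0 /\ c = (S1in p - lam1 p (D2 p)) / k1 p /\
               d = k2 p * (S1in p - F p i2 i) / (k1 p * k3 p)
  | E10_10 => a = X11s p /\ b = 0 /\ X12_eq p c /\ d = 0
  | E10_1 i => a = X11s p /\ b = 0 /\ X12_eq p c /\
               d = (S2in p + k2 p * c - lam2 p i (D2 p)) / k3 p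
  | E0_01 i => a = 0 /\ b = (S2in p - lam2 p i (D1 p)) / k3 p /\ c = 0 /\
               X22_eq p b c d
  | E0_11 i => a = 0 /\ b = (S2in p - lam2 p i (D1 p)) / k3 p /\
               c = (S1in p - lam1 p (D2 p)) / k1 p /\ X22_eq p b c d
  | E1_11 i => a = X11s p /\ b = k2 p * (S1in p - F p i1 i) / (k1 p * k3 p) /\
               X12_eq p c /\ X22_eq p b c d
  end.

Definition ss (p : params) (T : stype) (a b c d : R) : Prop :=
  steady p a b c d /\ in_domain p a b c d /\ form p T a b c d.

Definition unique_ss (p : params) (T : stype) : Prop :=
  exists a b c d, ss p T a b c d /\
    forall a' b' c' d', ss p T a' b' c' d' -> a' = a /\ b' = b /\ c' = c /\ d' = d.

Definition some_ss (p : params) (T : stype) : Prop :=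
  exists a b c d, ss p T a b c d.

Definition g22 (p : params) (b c : R) (x : R) : R :=
  mu2 p (S2in p + k2 p * c - k3 p * x) - D2 p * (x - b) / x.

(** Genericity: every steady state of type T is nondegenerate, i.e. X_2^{2*}
    is a simple zero of g22. *)
Definition generic (p : params) (T : stype) : Prop :=
  forall a b c d, ss p T a b c d -> Derive (g22 p b c) d <> 0.

Definition odd_number_ss (p : params) (T : stype) : Prop :=
  exists l : list (R * R * R * R),
    NoDup l /\ (forall a b c d, In (a, b, c, d) l <-> ss p T a b c d) /\
    Nat.odd (length l) = true.

Definition X21s (p : params) (T : stype) : R :=
  match T with
  | E0_11 i => (S2in p - lam2 p i (D1 p)) / k3 p
  | E1_11 i => k2 p * (S1in p - F p i1 i) / (k1 p * k3 p)
  | _ => 0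
  end.
Definition X12s (p : params) (T : stype) : R :=
  match T with
  | E0_11 i => (S1in p - lam1 p (D2 p)) / k1 p
  | E1_11 i => X12s_10 p
  | _ => 0
  end.
Definition x2m (p : params) (S2m : R) (T : stype) : R :=
  (S2in p + k2 p * X12s p T - S2m) / k3 p.

(* Main.v *)
Require Import Defs.
From Stdlib Require Import Reals List.
From Coquelicot Require Import Coquelicot.
From Stdlib Require Import Lra ClassicalEpsilon Classical.
Open Scope R_scope.

Lemma cont_eps f x : continuity_pt f x <->
  forall eps, 0 < eps -> exists d, 0 < d /\ forall y, Rabs (y - x) < d -> Rabs (f y - f x) < eps.
Proof.
  unfold continuity_pt, continue_in, limit1_in, limit_in; simpl; unfold R_dist.
  split.
  - intros H eps He. destruct (H eps He) as [d [Hd H']]. exists d; split; auto.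
    intros y Hy. destruct (Req_dec y x) as [->|Hne].
    + rewrite Rminus_eq_0, Rabs_R0; auto.
    + apply H'; split; auto. unfold D_x, no_cond; auto.
  - intros H eps He. destruct (H eps He) as [d [Hd H']]. exists d; split; auto.
    intros y [_ Hy]. auto.
Qed.

Definition ext (f : R -> R) x := f (Rmax 0 x).

Lemma at_right_eps f : filterlim f (at_right 0) (locally (f 0)) ->
  forall eps, 0 < eps -> exists d, 0 < d /\ forall y, 0 < y < d -> Rabs (f y - f 0) < eps.
Proof.
  intros H eps He.
  assert (Hl : locally (f 0) (ball (f 0) (mkposreal eps He))) by apply locally_ball.
  specialize (H _ Hl). destruct H as [d Hd].
  exists d; split; [apply cond_pos|]. intros y [Hy1 Hy2].
  apply Hd; auto. unfold ball; simpl; unfold AbsRing_ball; simpl. unfold abs, minus, plus, opp; simpl.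
  rewrite Rabs_right; lra.
Qed.
Lemma ext_cont f : C1_Rplus f -> forall x, 0 <= x -> continuity_pt (ext f) x.
Proof.
  intros [df [Hd [_ [Hr _]]]] x Hx.
  apply cont_eps. intros eps He.
  destruct (Rle_lt_or_eq_dec _ _ Hx) as [Hp| <-].
  - assert (Hc : continuity_pt f x).
    { apply derivable_continuous_pt. exists (df x). apply is_derive_Reals. now apply Hd. }
    destruct (proj1 (cont_eps f x) Hc eps He) as [d [Hd0 Hd1]].
    exists (Rmin d x); split. { apply Rmin_glb_lt; lra. }
    intros y Hy. unfold ext. assert (Rabs (y - x) < d) by (eapply Rlt_le_trans; [apply Hy| apply Rmin_l]).
    assert (Rabs (y - x) < x) by (eapply Rlt_le_trans; [apply Hy| apply Rmin_r]).
    apply Rabs_def2 in H0. rewrite !Rmax_right by lra. auto.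
  - destruct (at_right_eps f Hr eps He) as [d [Hd0 Hd1]].
    exists d; split; auto. intros y Hy. unfold ext. rewrite (Rmax_left 0 0) by lra.
    destruct (Rle_or_lt y 0).
    + rewrite Rmax_left by lra. rewrite Rminus_eq_0, Rabs_R0; lra.
    + rewrite Rmax_right by lra. apply Hd1. split; auto. rewrite Rminus_0_r, Rabs_right in Hy; lra.
Qed.

Lemma ext_eq f x : 0 <= x -> ext f x = f x.
Proof. intros; unfold ext; now rewrite Rmax_right. Qed.

Lemma ball_Rabs' (x e y : R) : ball x e y -> Rabs (y - x) < e.
Proof. intros H. exact H. Qed.

Lemma locally_pos_eq (f g : R -> R) x : 0 < x ->
  (forall t, 0 < t -> f t = g t) -> locally x (fun t => f t = g t).
Proof.
  intros Hx H. exists (mkposreal x Hx). intros t Ht. apply ball_Rabs' in Ht. simpl in Ht.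
  apply H. apply Rabs_def2 in Ht. lra.
Qed.

Lemma ext_derive f x : C1_Rplus f -> 0 < x -> is_derive (ext f) x (Derive f x).
Proof.
  intros [df [Hd _]] Hx.
  apply (is_derive_ext_loc f). apply locally_pos_eq; auto. intros t Ht. rewrite ext_eq; lra.
  assert (Derive f x = df x) as -> by (apply is_derive_unique; auto). auto.
Qed.

Lemma incr_strict f df a b : (forall x, a < x < b -> is_derive f x (df x) /\ df x > 0) ->
  (forall x, a <= x <= b -> continuity_pt f x) -> forall x y, a <= x -> x < y -> y <= b -> f x < f y.
Proof.
  intros Hd Hc x y Hax Hxy Hyb.
  assert (pr1 : forall c, x < c < y -> derivable_pt f c).
  { intros c Hc'. exists (df c). apply is_derive_Reals. apply Hd. lra. }
  destruct (MVT f id x y pr1 (fun c _ => derivable_pt_id c) Hxy) as [c [P HP]].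
  { intros; apply Hc; lra. }
  { intros; apply derivable_continuous_pt, derivable_pt_id. }
  rewrite derive_pt_id in HP. unfold id in HP.
  rewrite Derive_Reals in HP.
  assert (Derive f c = df c) as E by (apply is_derive_unique; apply Hd; lra).
  rewrite E in HP. destruct (Hd c) as [_ Hp]; [lra|]. nra.
Qed.

Lemma decr_strict f df a b : (forall x, a < x < b -> is_derive f x (df x) /\ df x < 0) ->
  (forall x, a <= x <= b -> continuity_pt f x) -> forall x y, a <= x -> x < y -> y <= b -> f y < f x.
Proof.
  intros Hd Hc x y Hax Hxy Hyb.
  assert (pr1 : forall c, x < c < y -> derivable_pt f c).
  { intros c Hc'. exists (df c). apply is_derive_Reals. apply Hd. lra. }
  destruct (MVT f id x y pr1 (fun c _ => derivable_pt_id c) Hxy) as [c [P HP]].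
  { intros; apply Hc; lra. }
  { intros; apply derivable_continuous_pt, derivable_pt_id. }
  rewrite derive_pt_id in HP. unfold id in HP.
  rewrite Derive_Reals in HP.
  assert (Derive f c = df c) as E by (apply is_derive_unique; apply Hd; lra).
  rewrite E in HP. destruct (Hd c) as [_ Hp]; [lra|]. nra.
Qed.

Lemma mu1_incr mu m1 : H1 mu m1 -> forall x y, 0 <= x -> x < y -> mu x < mu y.
Proof.
  intros [HC [H0 [_ Hd]]] x y Hx Hxy.
  rewrite <- (ext_eq mu x), <- (ext_eq mu y) by lra.
  apply (incr_strict (ext mu) (Derive mu) 0 y); try lra.
  - intros t Ht. split. apply ext_derive; auto; lra. apply Hd; lra.
  - intros t Ht. apply ext_cont; auto; lra.
Qed.

Lemma mu1_nonneg mu m1 : H1 mu m1 -> forall x, 0 <= x -> 0 <= mu x.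
Proof.
  intros H x Hx. destruct (Rle_lt_or_eq_dec _ _ Hx) as [Hp| <-].
  - pose proof (mu1_incr mu m1 H 0 x (Rle_refl 0) Hp) as Hq. destruct H as [_ [H0 _]]. lra.
  - destruct H as [_ [H0 _]]; lra.
Qed.

Lemma mu2_incr mu S2m : H2 mu S2m -> forall x y, 0 <= x -> x < y -> y <= S2m -> mu x < mu y.
Proof.
  intros [HC [H0 [_ [HS [Hd _]]]]] x y Hx Hxy Hy.
  rewrite <- (ext_eq mu x), <- (ext_eq mu y) by lra.
  apply (incr_strict (ext mu) (Derive mu) 0 S2m); try lra.
  - intros t Ht. split. apply ext_derive; auto; lra. apply Hd; lra.
  - intros t Ht. apply ext_cont; auto; lra.
Qed.

Lemma mu2_decr mu S2m : H2 mu S2m -> forall x y, S2m <= x -> x < y -> mu y < mu x.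
Proof.
  intros [HC [H0 [_ [HS [_ Hd]]]]] x y Hx Hxy.
  rewrite <- (ext_eq mu x), <- (ext_eq mu y) by lra.
  apply (decr_strict (ext mu) (Derive mu) S2m y); try lra.
  - intros t Ht. split. apply ext_derive; auto; lra. apply Hd; lra.
  - intros t Ht. apply ext_cont; auto; lra.
Qed.

Lemma mu2_pos mu S2m : H2 mu S2m -> forall x, 0 < x -> 0 < mu x.
Proof.
  intros H x Hx. pose proof H as [HC [H0 [Hl [HS _]]]].
  destruct (Rle_or_lt x S2m).
  - pose proof (mu2_incr mu S2m H 0 x (Rle_refl 0) Hx H1) as Hq. lra.
  - apply Rnot_le_lt. intros Hn.
    pose proof (mu2_decr mu S2m H x (x+1) (Rlt_le _ _ H1) ltac:(lra)) as Hx1.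
    apply is_lim_spec in Hl. simpl in Hl.
    assert (He : 0 < - mu (x+1)) by lra.
    destruct (Hl (mkposreal _ He)) as [M HM]. simpl in HM.
    set (y := Rmax M (x+1) + 1).
    assert (M < y) by (unfold y; pose proof (Rmax_l M (x+1)); lra).
    assert (x + 1 < y) by (unfold y; pose proof (Rmax_r M (x+1)); lra).
    specialize (HM y H2). pose proof (mu2_decr mu S2m H (x+1) y ltac:(lra) H3) as Hq.
    rewrite Rminus_0_r in HM. apply Rabs_def2 in HM. lra.
Qed.

Lemma mu2_nonneg mu S2m : H2 mu S2m -> forall x, 0 <= x -> 0 <= mu x.
Proof.
  intros H x Hx. destruct (Rle_lt_or_eq_dec _ _ Hx) as [Hp| <-].
  - pose proof (mu2_pos mu S2m H x Hp); lra.
  - destruct H as [_ [H0 _]]; lra.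
Qed.

Definition clamp a b x := Rmin b (Rmax a x).

Lemma clamp_lip a b x y : a <= b -> Rabs (clamp a b y - clamp a b x) <= Rabs (y - x).
Proof.
  intros Hab. unfold clamp, Rmin, Rmax.
  repeat (destruct Rle_dec); split_Rabs; lra.
Qed.

Lemma clamp_in a b x : a <= b -> a <= clamp a b x <= b.
Proof. intros; unfold clamp, Rmin, Rmax; repeat destruct Rle_dec; lra. Qed.

Lemma clamp_id a b x : a <= x <= b -> clamp a b x = x.
Proof. intros; unfold clamp, Rmin, Rmax; repeat destruct Rle_dec; lra. Qed.

Lemma clamp_cont a b x : a <= b -> continuity_pt (clamp a b) x.
Proof.
  intros Hab. apply cont_eps. intros eps He. exists eps; split; auto.
  intros y Hy. eapply Rle_lt_trans; [apply clamp_lip|]; auto.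
Qed.

Lemma ivt_dec f a b : a < b -> (forall x, a <= x <= b -> continuity_pt f x) ->
  f a > 0 -> f b < 0 -> exists z, a < z < b /\ f z = 0.
Proof.
  intros Hab Hc Ha Hb.
  set (h := fun x => - f (clamp a b x)).
  assert (Hh : continuity h).
  { intros x. unfold h. apply continuity_pt_opp.
    apply (continuity_pt_comp (clamp a b) f). apply clamp_cont; lra.
    apply Hc. apply clamp_in; lra. }
  destruct (IVT h a b Hh Hab) as [z [Hz Hz0]].
  { unfold h; rewrite clamp_id; lra. }
  { unfold h; rewrite clamp_id; lra. }
  unfold h in Hz0; rewrite clamp_id in Hz0 by lra.
  exists z. split; [|lra].
  destruct (Req_dec z a); [subst; lra|]. destruct (Req_dec z b); [subst; lra|]. lra.
Qed.

Lemma loc_nz g s : continuity_pt g s -> g s <> 0 ->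
  exists d, 0 < d /\ forall x, Rabs (x - s) < d -> g x <> 0 /\ (g x < 0 <-> g s < 0).
Proof.
  intros Hc Hn. assert (He : 0 < Rabs (g s)) by (apply Rabs_pos_lt; auto).
  destruct (proj1 (cont_eps g s) Hc _ He) as [d [Hd H]].
  exists d; split; auto. intros x Hx. specialize (H x Hx).
  destruct (Rlt_or_le (g s) 0) as [Hl|Hl].
  - rewrite (Rabs_left (g s)) in H by lra. apply Rabs_def2 in H. split; [lra|split; intros; lra].
  - rewrite (Rabs_right (g s)) in H by lra. apply Rabs_def2 in H. split; [lra|split; intros; lra].
Qed.

Lemma loc_z g s df : g s = 0 -> is_derive g s df -> df <> 0 ->
  exists d, 0 < d /\ forall x, Rabs (x - s) < d -> x <> s -> g x * df * (x - s) > 0.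
Proof.
  intros Hz Hd Hn. apply is_derive_Reals in Hd.
  assert (He : 0 < Rabs df / 2) by (pose proof (Rabs_pos_lt _ Hn); lra).
  destruct (Hd _ He) as [d H]. exists d; split; [apply cond_pos|].
  intros x Hx Hxs. assert (Hh : x - s <> 0) by lra.
  specialize (H (x - s) Hh Hx). replace (s + (x - s)) with x in H by ring.
  rewrite Hz, Rminus_0_r in H.
  set (q := g x / (x - s)) in *.
  assert (Hq : q * df > 0).
  { destruct (Rlt_or_le df 0).
    - rewrite (Rabs_left df) in He, H by lra. apply Rabs_def2 in H. nra.
    - rewrite (Rabs_right df) in He, H by lra. apply Rabs_def2 in H. nra. }
  assert (Eg : g x = q * (x - s)) by (unfold q; field; auto).
  rewrite Eg. assert (0 < (x - s) * (x - s)) by (destruct (Rlt_or_le (x-s) 0); nra).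
  nra.
Qed.

Lemma odd_zeros g a b : a < b -> (forall x, a <= x <= b -> continuity_pt g x) -> g a > 0 -> g b < 0 ->
  (forall z, a <= z <= b -> g z = 0 -> exists df, df <> 0 /\ is_derive g z df) ->
  exists l, NoDup l /\ (forall x, In x l <-> a <= x <= b /\ g x = 0) /\ Nat.odd (length l) = true.
Proof.
  intros Hab Hc Ha Hb Hd.
  set (S := fun t => a <= t <= b /\ g t <> 0 /\ exists l, NoDup l /\
     (forall x, In x l <-> a <= x <= t /\ g x = 0) /\ (Nat.odd (length l) = true <-> g t < 0)).
  assert (Sa : S a).
  { split; [lra|split; [lra|]]. exists nil. split; [constructor|]. split.
    - intros x; simpl; split; [tauto| intros [H1 H2]; assert (x = a) by lra; subst; lra].
    - simpl; split; intros; [discriminate|lra]. }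
  assert (Hbd : bound S) by (exists b; intros t [Ht _]; lra).
  destruct (completeness S Hbd (ex_intro _ a Sa)) as [m [Hub Hlub]].
  assert (Ham : a <= m) by (apply Hub; auto).
  assert (Hmb : m <= b) by (apply Hlub; intros t [Ht _]; lra).
  assert (Hnear : forall d, 0 < d -> exists t, S t /\ m - d < t /\ t <= m).
  { intros d Hd0. apply NNPP. intros Hn.
    assert (Hu : is_upper_bound S (m - d)).
    { intros t St. apply Rnot_lt_le. intros Hlt. apply Hn. exists t. split; [auto|]. split; [lra|]. apply Hub; auto. }
    specialize (Hlub _ Hu). lra. }
  destruct (Req_dec (g m) 0) as [Hz|Hnz].
  - exfalso.
    assert (a < m) by (destruct (Req_dec a m); [subst; lra| lra]).
    assert (m < b) by (destruct (Req_dec m b); [subst; lra| lra]).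
    destruct (Hd m ltac:(lra) Hz) as [df [Hdf Hder]].
    destruct (loc_z g m df Hz Hder Hdf) as [d [Hd0 Hloc]].
    destruct (Hnear d Hd0) as [t [[Ht [Hgt [l [Hnd [Hl Hpar]]]]] [Htd Htm]]].
    assert (Htm' : t < m) by (destruct (Req_dec t m); [subst; contradiction| lra]).
    set (u := Rmin (m + d/2) b).
    assert (Hu1 : m < u) by (unfold u; apply Rmin_glb_lt; lra).
    assert (Hu2 : u <= m + d/2) by apply Rmin_l.
    assert (Hu3 : u <= b) by apply Rmin_r.
    assert (Hgu : g u * df * (u - m) > 0) by (apply Hloc; [apply Rabs_def1; lra| lra]).
    assert (Hgt' : g t * df * (t - m) > 0) by (apply Hloc; [apply Rabs_def1; lra| lra]).
    assert (Hs1 : g t * df < 0) by nra.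
    assert (Hs2 : g u * df > 0) by nra.
    assert (Su : S u).
    { split; [lra|]. split; [intros E; rewrite E in Hs2; lra|].
      exists (m :: l). split; [|split].
      - constructor; auto. intros Hin. apply Hl in Hin. lra.
      - intros x. simpl. split.
        + intros [<-|Hin]; [split; [lra|auto]|]. apply Hl in Hin. split; [lra|tauto].
        + intros [Hx Hgx]. destruct (Rle_or_lt x t).
          * right. apply Hl. split; [lra|auto].
          * destruct (Req_dec x m) as [Hxm|Hxm]; [left; auto|].
            exfalso. assert (Hq : g x * df * (x - m) > 0) by (apply Hloc; [apply Rabs_def1; lra| auto]).
            rewrite Hgx in Hq. lra.
      - simpl length. rewrite Nat.odd_succ, <- Nat.negb_odd.
        destruct (Nat.odd (length l)); simpl.
        + assert (g t < 0) by (apply Hpar; auto). split; intros; [discriminate|nra].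
        + assert (~ g t < 0) by (intros Hq; apply Hpar in Hq; discriminate).
          assert (g t > 0) by (destruct (Rtotal_order (g t) 0) as [?|[?|?]]; auto; contradiction).
          split; intros; [nra|reflexivity]. }
    specialize (Hub u Su). lra.
  - destruct (loc_nz g m (Hc m ltac:(lra)) Hnz) as [d [Hd0 Hloc]].
    destruct (Hnear d Hd0) as [t [[Ht [Hgt [l [Hnd [Hl Hpar]]]]] [Htd Htm]]].
    set (u := Rmin (m + d/2) b).
    assert (Hu1 : m <= u) by (unfold u; apply Rmin_glb; lra).
    assert (Hu2 : u <= m + d/2) by apply Rmin_l.
    assert (Hu3 : u <= b) by apply Rmin_r.
    destruct (Hloc u ltac:(apply Rabs_def1; lra)) as [Hgu Hsu].
    destruct (Hloc t ltac:(apply Rabs_def1; lra)) as [_ Hst].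
    assert (Su : S u).
    { split; [lra|]. split; auto. exists l. split; auto. split.
      - intros x. rewrite Hl. split; intros [Hx Hgx].
        + split; [lra|auto].
        + split; auto. split; [lra|]. destruct (Rle_or_lt x t); [lra|]. exfalso.
          destruct (Hloc x ltac:(apply Rabs_def1; lra)) as [Hx0 _]. auto.
      - rewrite Hpar, Hst, Hsu. tauto. }
    assert (Hum : u <= m) by (apply Hub; auto).
    assert (Hub' : u = b).
    { unfold u in *. destruct (Rle_or_lt (m + d/2) b).
      - rewrite Rmin_left in Hum by lra. lra.
      - rewrite Rmin_right by lra. auto. }
    rewrite Hub' in Su. destruct Su as [_ [_ [l' [Hnd' [Hl' Hpar']]]]].
    exists l'. split; auto. split; auto. apply Hpar'; auto.
Qed.

Lemma mu2_inj_l mu S2m : H2 mu S2m -> forall x y, 0 <= x <= S2m -> 0 <= y <= S2m -> mu x = mu y -> x = y.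
Proof.
  intros H x y Hx Hy E. destruct (Rtotal_order x y) as [Hl|[Hl|Hl]]; auto.
  - pose proof (mu2_incr mu S2m H x y ltac:(lra) Hl ltac:(lra)); lra.
  - pose proof (mu2_incr mu S2m H y x ltac:(lra) Hl ltac:(lra)); lra.
Qed.

Lemma mu2_inj_r mu S2m : H2 mu S2m -> forall x y, S2m <= x -> S2m <= y -> mu x = mu y -> x = y.
Proof.
  intros H x y Hx Hy E. destruct (Rtotal_order x y) as [Hl|[Hl|Hl]]; auto.
  - pose proof (mu2_decr mu S2m H x y ltac:(lra) Hl); lra.
  - pose proof (mu2_decr mu S2m H y x ltac:(lra) Hl); lra.
Qed.

Lemma lam1_spec p Di : lam1_fin p Di -> 0 <= lam1 p Di /\ mu1 p (lam1 p Di) = Di.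
Proof. intros H. unfold lam1. apply (epsilon_spec (inhabits 0) _ H). Qed.

Lemma lam2_spec p S2m j Di : H2 (mu2 p) S2m -> 0 < Di -> lam2_fin p Di ->
  0 <= lam2 p j Di /\ mu2 p (lam2 p j Di) = Di /\ (j = i1 -> lam2 p j Di <= S2m).
Proof.
  intros H HD [S0 [HS0 ES0]].
  pose proof H as [HC [H0 [_ [HS _]]]].
  assert (Hlow : exists S1, 0 <= S1 <= S2m /\ mu2 p S1 = Di).
  { destruct (Rle_or_lt S0 S2m). exists S0; split; [lra|auto].
    destruct (ivt_dec (fun x => Di - ext (mu2 p) x) 0 S2m) as [z [Hz Ez]]; auto.
    - intros x Hx. apply continuity_pt_minus. apply continuity_pt_const. intros u v; auto.
      apply ext_cont; auto; lra.
    - rewrite ext_eq by lra. lra.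
    - rewrite ext_eq by lra. pose proof (mu2_decr _ _ H S2m S0 ltac:(lra) H1). lra.
    - exists z. rewrite ext_eq in Ez by lra. split; [lra|lra]. }
  destruct Hlow as [S1 [HS1 ES1]].
  assert (Hmin : forall S', 0 <= S' -> mu2 p S' = Di -> S1 <= S').
  { intros S' H1 E1. destruct (Rle_or_lt S' S2m); [|lra].
    assert (S' = S1) by (apply (mu2_inj_l _ _ H); auto; lra). lra. }
  destruct j.
  - assert (Hex : exists S, 0 <= S /\ mu2 p S = Di /\ forall S', 0 <= S' -> mu2 p S' = Di -> S <= S')
      by (exists S1; split; [lra|split; auto]).
    pose proof (epsilon_spec (inhabits 0) _ Hex) as [A1 [A2 A3]].
    simpl. split; auto. split; auto. intros _. specialize (A3 S1 ltac:(lra) ES1). lra.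
  - assert (Hex : exists S, 0 <= S /\ mu2 p S = Di /\ forall S', 0 <= S' -> mu2 p S' = Di -> S' <= S).
    { destruct (classic (exists S', S2m <= S' /\ mu2 p S' = Di)) as [[S' [H1 E1]]|Hn].
      - exists S'. split; [lra|split; auto]. intros S'' H2' E2.
        destruct (Rle_or_lt S2m S''). right. apply (mu2_inj_r _ _ H); auto; congruence. lra.
      - exists S1. split; [lra|split; auto]. intros S'' H2' E2.
        destruct (Rle_or_lt S'' S2m). right. apply (mu2_inj_l _ _ H); auto; try lra; congruence.
        exfalso. apply Hn. exists S''. split; auto; lra. }
    pose proof (epsilon_spec (inhabits 0) _ Hex) as [A1 [A2 A3]].
    simpl. split; auto. split; auto. intros E; discriminate.
Qed.

Lemma gcont mu A k D B x : C1_Rplus mu -> 0 < x -> 0 <= A - k * x ->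
  continuity_pt (fun x => ext mu (A - k*x) - D*(x-B)/x) x.
Proof.
  intros HC Hx HA. apply continuity_pt_minus.
  - apply (continuity_pt_comp (fun x => A - k*x) (ext mu)).
    + apply derivable_continuous_pt. apply ex_derive_Reals_0. auto_derive. auto.
    + apply ext_cont; auto.
  - apply derivable_continuous_pt. apply ex_derive_Reals_0. auto_derive. lra.
Qed.

Lemma D1_pos p : params_ok p -> 0 < D1 p.
Proof. intros (?&?&?&?&?&?&?&?). unfold D1. apply Rdiv_lt_0_compat; lra. Qed.
Lemma D2_pos p : params_ok p -> 0 < D2 p.
Proof. intros (?&?&?&?&?&?&?&?). unfold D2. apply Rdiv_lt_0_compat; lra. Qed.

Lemma frac_lt D b x y : 0 < D -> 0 < b -> 0 < x -> x < y -> D*(x-b)/x < D*(y-b)/y.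
Proof.
  intros HD Hb Hx Hxy.
  assert (E1 : D*(x-b)/x = D - D*b*/x) by (field; lra).
  assert (E2 : D*(y-b)/y = D - D*b*/y) by (field; lra).
  rewrite E1, E2. assert (/y < /x) by (apply Rinv_lt_contravar; nra).
  assert (0 < D*b) by nra. nra.
Qed.

Lemma frac_le0 D b x : 0 < D -> 0 < x -> x <= b -> D*(x-b)/x <= 0.
Proof.
  intros HD Hx Hxb. unfold Rdiv. assert (0 < /x) by (apply Rinv_0_lt_compat; lra).
  assert (D*(x-b) <= 0) by nra. nra.
Qed.

Lemma X12_facts p m1 : params_ok p -> H1 (mu1 p) m1 -> lam1_fin p (D1 p) -> S1in p > lam1 p (D1 p) ->
  0 < lam1 p (D1 p) /\ 0 < X11s p /\ X12_eq p (X12s_10 p) /\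
  (forall x, X12_eq p x -> X11s p < x /\ x = X12s_10 p).
Proof.
  intros Hp Hm Hf Hs. pose proof Hp as (Hk1&Hk2&Hk3&HD&Hr&Hr'&HS1&HS2).
  pose proof (D1_pos p Hp) as HD1. pose proof (D2_pos p Hp) as HD2.
  destruct (lam1_spec p _ Hf) as [HL EL].
  assert (HL' : 0 < lam1 p (D1 p)).
  { destruct (Rle_lt_or_eq_dec _ _ HL); auto. rewrite <- e in EL. destruct Hm as [_ [H0 _]]. lra. }
  set (L := lam1 p (D1 p)) in *.
  assert (HX : 0 < X11s p) by (unfold X11s; apply Rdiv_lt_0_compat; fold L; lra).
  assert (EX : k1 p * X11s p = S1in p - L) by (unfold X11s; fold L; field; lra).
  assert (Hgt : forall x, X12_eq p x -> X11s p < x).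
  { intros x [Hx [Hdom E]]. apply Rnot_le_lt. intros Hle.
    destruct (Rle_lt_or_eq_dec _ _ Hle) as [Hlt|Heq].
    - pose proof (mu1_nonneg _ _ Hm _ Hdom). pose proof (frac_le0 (D2 p) (X11s p) x HD2 Hx Hle).
      assert (D2 p * (x - X11s p) / x < 0).
      { unfold Rdiv. assert (0 < /x) by (apply Rinv_0_lt_compat; lra).
        assert (D2 p*(x-X11s p) < 0) by nra. nra. }
      lra.
    - subst x. rewrite EX in E. replace (S1in p - (S1in p - L)) with L in E by ring.
      replace (X11s p - X11s p) with 0 in E by ring. fold L in EL. rewrite EL in E.
      unfold Rdiv in E. rewrite Rmult_0_r, Rmult_0_l in E. lra. }
  assert (Huniq : forall x y, X12_eq p x -> X12_eq p y -> x = y).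
  { intros x y Hx Hy. pose proof (Hgt x Hx). pose proof (Hgt y Hy).
    destruct Hx as [Hx [Hdx Ex]]. destruct Hy as [Hy [Hdy Ey]].
    destruct (Rtotal_order x y) as [Hl|[Hl|Hl]]; auto; exfalso.
    - pose proof (mu1_incr _ _ Hm (S1in p - k1 p * y) (S1in p - k1 p * x) Hdy ltac:(nra)).
      pose proof (frac_lt (D2 p) (X11s p) x y HD2 HX Hx Hl). lra.
    - pose proof (mu1_incr _ _ Hm (S1in p - k1 p * x) (S1in p - k1 p * y) Hdx ltac:(nra)).
      pose proof (frac_lt (D2 p) (X11s p) y x HD2 HX Hy Hl). lra. }
  assert (Hex : exists x, X12_eq p x).
  { set (b := S1in p / k1 p).
    assert (Eb : k1 p * b = S1in p) by (unfold b; field; lra).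
    assert (HXb : X11s p < b) by nra.
    destruct (ivt_dec (fun x => ext (mu1 p) (S1in p - k1 p * x) - D2 p * (x - X11s p) / x) (X11s p) b)
      as [z [Hz Ez]]; auto.
    - intros x Hx. apply gcont. apply Hm. lra. nra.
    - simpl. rewrite ext_eq by lra. rewrite EX. replace (S1in p - (S1in p - L)) with L by ring.
      fold L in EL. rewrite EL. replace (X11s p - X11s p) with 0 by ring. unfold Rdiv. rewrite Rmult_0_r, Rmult_0_l. lra.
    - simpl. rewrite Eb, Rminus_eq_0, ext_eq by lra. destruct Hm as [_ [H0 _]]. rewrite H0.
      assert (0 < D2 p * (b - X11s p) / b) by (apply Rdiv_lt_0_compat; nra). lra.
    - exists z. simpl in Ez. assert (0 <= S1in p - k1 p * z) by nra.
      rewrite ext_eq in Ez by auto. split; [lra|split; [auto|lra]]. }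
  pose proof (epsilon_spec (inhabits 0) _ Hex) as Hs10. fold (X12s_10 p) in Hs10.
  split; [auto|split; [auto|split; [auto|]]]. intros x Hx. split; auto.
Qed.

Lemma C1_ex_derive f x : C1_Rplus f -> 0 < x -> ex_derive f x.
Proof. intros [df [Hd _]] Hx. exists (df x). auto. Qed.

Lemma X22_fam p S2m b c : params_ok p -> H2 (mu2 p) S2m -> 0 < b -> 0 < S2in p + k2 p * c - k3 p * b ->
  (exists d, X22_eq p b c d /\ 0 <= d /\ 0 <= S2in p + k2 p * c - k3 p * d) /\
  (S2in p + k2 p * c - k3 p * b <= S2m -> forall d d',
     X22_eq p b c d /\ 0 <= d /\ 0 <= S2in p + k2 p * c - k3 p * d ->
     X22_eq p b c d' /\ 0 <= d' /\ 0 <= S2in p + k2 p * c - k3 p * d' -> d = d') /\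
  ((forall d, X22_eq p b c d /\ 0 <= d /\ 0 <= S2in p + k2 p * c - k3 p * d -> Derive (g22 p b c) d <> 0) ->
     exists l, NoDup l /\ (forall d, In d l <-> X22_eq p b c d /\ 0 <= d /\ 0 <= S2in p + k2 p * c - k3 p * d)
       /\ Nat.odd (length l) = true).
Proof.
  intros Hp Hm Hb HAb. pose proof Hp as (Hk1&Hk2&Hk3&HD&Hr&Hr'&HS1&HS2).
  pose proof (D2_pos p Hp) as HD2. pose proof Hm as [HC [H0 _]].
  unfold g22, X22_eq.
  set (A := S2in p + k2 p * c) in *.
  set (be := A / k3 p).
  assert (Ebe : k3 p * be = A) by (unfold be; field; lra).
  assert (Hbbe : b < be) by nra.
  set (gt := fun x => ext (mu2 p) (A - k3 p * x) - D2 p * (x - b) / x).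
  assert (Hcont : forall x, b <= x <= be -> continuity_pt gt x).
  { intros x Hx. apply gcont; auto; nra. }
  assert (Hgb : gt b > 0).
  { unfold gt. rewrite ext_eq by lra. pose proof (mu2_pos _ _ Hm _ HAb).
    replace (b - b) with 0 by ring. unfold Rdiv. rewrite Rmult_0_r, Rmult_0_l. lra. }
  assert (Hgbe : gt be < 0).
  { unfold gt. rewrite Ebe, Rminus_eq_0, ext_eq, H0 by lra.
    assert (0 < D2 p * (be - b) / be) by (apply Rdiv_lt_0_compat; nra). lra. }
  assert (HP : forall d, (0 < d /\ mu2 p (A - k3 p * d) = D2 p * (d - b) / d) /\ 0 <= d /\ 0 <= A - k3 p * d
                 <-> b <= d <= be /\ gt d = 0).
  { intros d. split.
    - intros [[Hd E] [_ Hdom]]. assert (d <= be) by nra.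
      assert (b <= d).
      { apply Rnot_lt_le. intros Hlt. pose proof (mu2_nonneg _ _ Hm _ Hdom).
        assert (D2 p * (d - b) / d < 0).
        { unfold Rdiv. assert (0 < /d) by (apply Rinv_0_lt_compat; lra).
          assert (D2 p*(d-b) < 0) by nra. nra. }
        lra. }
      split; [lra|]. unfold gt. rewrite ext_eq by auto. lra.
    - intros [Hd E]. unfold gt in E. assert (0 <= A - k3 p * d) by nra.
      rewrite ext_eq in E by auto. split; [split; lra|split; lra]. }
  split; [|split].
  - destruct (ivt_dec gt b be Hbbe Hcont Hgb Hgbe) as [z [Hz Ez]].
    exists z. apply HP. split; [lra|auto].
  - intros HS d d' Hd Hd'. apply HP in Hd. apply HP in Hd'.
    destruct Hd as [Hd Ed]. destruct Hd' as [Hd' Ed'].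
    assert (Hdec : forall x y, b <= x -> x < y -> y <= be -> gt y < gt x).
    { intros x y Hx Hxy Hy. unfold gt. rewrite !ext_eq by nra.
      pose proof (mu2_incr _ _ Hm (A - k3 p * y) (A - k3 p * x) ltac:(nra) ltac:(nra) ltac:(nra)).
      pose proof (frac_lt (D2 p) b x y HD2 Hb ltac:(lra) Hxy). lra. }
    destruct (Rtotal_order d d') as [Hl|[Hl|Hl]]; auto; exfalso.
    + pose proof (Hdec d d' ltac:(lra) Hl ltac:(lra)). lra.
    + pose proof (Hdec d' d ltac:(lra) Hl ltac:(lra)). lra.
  - intros Hgen.
    destruct (odd_zeros gt b be Hbbe Hcont Hgb Hgbe) as [l [Hnd [Hl Hodd]]].
    + intros z Hz Ez.
      assert (Hzb : z <> b) by (intros ->; lra).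
      assert (Hzbe : z <> be) by (intros ->; lra).
      assert (HPz := proj2 (HP z) (conj Hz Ez)).
      exists (Derive (fun x => mu2 p (A - k3 p * x) - D2 p * (x - b) / x) z). split.
      * apply Hgen. auto.
      * apply (is_derive_ext_loc (fun x => mu2 p (A - k3 p * x) - D2 p * (x - b) / x)).
        -- assert (Hr0 : 0 < be - z) by lra. exists (mkposreal _ Hr0). intros t Ht.
           apply ball_Rabs' in Ht. simpl in Ht. apply Rabs_def2 in Ht.
           unfold gt. rewrite ext_eq; auto. nra.
        -- apply Derive_correct. auto_derive. split; [|lra].
           apply C1_ex_derive; auto. nra.
    + exists l. split; auto. split; auto. intros d. rewrite Hl. symmetry. apply HP.
Qed.

Lemma fam_result p T a0 b0 c0 (P : R -> Prop) :
  (forall a b c d, ss p T a b c d <-> a = a0 /\ b = b0 /\ c = c0 /\ P d) ->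
  ((exists d, P d) -> some_ss p T) /\
  ((exists d, P d) -> (forall d d', P d -> P d' -> d = d') -> unique_ss p T) /\
  ((exists l, NoDup l /\ (forall d, In d l <-> P d) /\ Nat.odd (length l) = true) -> odd_number_ss p T) /\
  (generic p T -> forall d, P d -> Derive (g22 p b0 c0) d <> 0).
Proof.
  intros Hc. split; [|split; [|split]].
  - intros [d Hd]. exists a0, b0, c0, d. apply Hc; auto.
  - intros [d Hd] Hu. exists a0, b0, c0, d. split; [apply Hc; auto|].
    intros a' b' c' d' H. apply Hc in H. destruct H as (->&->&->&H). repeat split; auto.
  - intros [l [Hnd [Hl Ho]]]. exists (map (fun d => (a0, b0, c0, d)) l). split; [|split].
    + apply NoDup_map_NoDup_ForallPairs; auto. intros x y _ _ E. injection E; auto.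
    + intros a b c d. rewrite in_map_iff. rewrite Hc. split.
      * intros [x [E Hx]]. injection E; intros; subst. repeat split; auto. apply Hl; auto.
      * intros (->&->&->&Hd). exists d. split; auto. apply Hl; auto.
    + rewrite length_map. auto.
  - intros Hg d Hd. apply (Hg a0 b0 c0 d). apply Hc. repeat split; auto.
Qed.

Lemma eq4_lemma D m b d : 0 < d -> m = D * (d - b) / d -> D * (b - d) + m * d = 0.
Proof. intros Hd ->. field. lra. Qed.

Ltac unfold_ss := unfold ss, steady, in_domain, form.

Lemma u_E00_00 p : params_ok p -> unique_ss p E00_00.
Proof.
  intros Hp. pose proof Hp as (Hk1&Hk2&Hk3&HD&Hr&Hr'&HS1&HS2).
  exists 0, 0, 0, 0. split.
  - unfold_ss. repeat split; try ring; try lra; try nra.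
  - intros a b c d [_ [_ F]]. simpl in F. tauto.
Qed.

Lemma u_E00_0 p S2m i : params_ok p -> H2 (mu2 p) S2m -> exist_cond p (E00_0 i) -> unique_ss p (E00_0 i).
Proof.
  intros Hp Hm [Hf Hs]. pose proof Hp as (Hk1&Hk2&Hk3&HD&Hr&Hr'&HS1&HS2).
  pose proof (D2_pos p Hp) as HD2.
  destruct (lam2_spec p S2m i (D2 p) Hm HD2 Hf) as [HL [EL _]].
  set (L := lam2 p i (D2 p)) in *.
  set (d0 := (S2in p - L) / k3 p).
  assert (Ed : k3 p * d0 = S2in p - L) by (unfold d0; field; lra).
  assert (Hd0 : 0 < d0) by (unfold d0; apply Rdiv_lt_0_compat; lra).
  exists 0, 0, 0, d0. split.
  - unfold_ss. replace (S2in p + k2 p * 0 - k3 p * d0) with L by lra.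
    repeat split; try ring; try lra; try nra. all: try (rewrite EL; ring).
  - intros a b c d [_ [_ F]]. simpl in F. fold L in F. fold d0 in F. tauto.
Qed.

Lemma u_E00_10 p m1 : params_ok p -> H1 (mu1 p) m1 -> exist_cond p E00_10 -> unique_ss p E00_10.
Proof.
  intros Hp Hm [Hf Hs]. pose proof Hp as (Hk1&Hk2&Hk3&HD&Hr&Hr'&HS1&HS2).
  destruct (lam1_spec p _ Hf) as [HL EL].
  set (L := lam1 p (D2 p)) in *.
  set (c0 := (S1in p - L) / k1 p).
  assert (Ec : k1 p * c0 = S1in p - L) by (unfold c0; field; lra).
  assert (Hc0 : 0 < c0) by (unfold c0; apply Rdiv_lt_0_compat; lra).
  exists 0, 0, c0, 0. split.
  - unfold_ss. replace (S1in p - k1 p * c0) with L by lra.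
    repeat split; try ring; try lra; try nra. all: try (rewrite EL; ring).
  - intros a b c d [_ [_ F]]. simpl in F. fold L in F. fold c0 in F. tauto.
Qed.

Lemma u_E00_1 p m1 S2m i : params_ok p -> H1 (mu1 p) m1 -> H2 (mu2 p) S2m ->
  exist_cond p (E00_1 i) -> unique_ss p (E00_1 i).
Proof.
  intros Hp Hm1 Hm2 [Hf1 [Hf2 [Hs1 Hs2]]]. pose proof Hp as (Hk1&Hk2&Hk3&HD&Hr&Hr'&HS1&HS2).
  pose proof (D2_pos p Hp) as HD2.
  destruct (lam1_spec p _ Hf1) as [HL EL].
  destruct (lam2_spec p S2m i (D2 p) Hm2 HD2 Hf2) as [HL2 [EL2 _]].
  unfold F in *. simpl Dlev in *.
  set (L := lam1 p (D2 p)) in *. set (L2 := lam2 p i (D2 p)) in *.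
  set (c0 := (S1in p - L) / k1 p).
  assert (Ec : k1 p * c0 = S1in p - L) by (unfold c0; field; lra).
  assert (Hc0 : 0 < c0) by (unfold c0; apply Rdiv_lt_0_compat; lra).
  set (d0 := k2 p * (S1in p - (L + k1 p / k2 p * (L2 - S2in p))) / (k1 p * k3 p)).
  assert (Hd0 : 0 < d0) by (unfold d0; apply Rdiv_lt_0_compat; [apply Rmult_lt_0_compat|]; nra).
  assert (Ed : S2in p + k2 p * c0 - k3 p * d0 = L2) by (unfold d0, c0; field; lra).
  exists 0, 0, c0, d0. split.
  - unfold_ss. rewrite Ed. replace (S1in p - k1 p * c0) with L by lra.
    repeat split; try ring; try lra; try nra. all: try (rewrite EL; ring); try (rewrite EL2; ring).
  - intros a b c d [_ [_ Fm]]. simpl in Fm. unfold F in Fm. simpl Dlev in Fm. fold L L2 in Fm. fold c0 in Fm. fold d0 in Fm. tauto.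
Qed.

Lemma E10_common p m1 : params_ok p -> H1 (mu1 p) m1 -> lam1_fin p (D1 p) -> S1in p > lam1 p (D1 p) ->
  0 < X11s p /\ X11s p < X12s_10 p /\ X12_eq p (X12s_10 p) /\
  (forall x, X12_eq p x -> x = X12s_10 p) /\
  S1in p - k1 p * X11s p = lam1 p (D1 p) /\ mu1 p (lam1 p (D1 p)) = D1 p /\ 0 < lam1 p (D1 p) /\
  D2 p * (X11s p - X12s_10 p) + mu1 p (S1in p - k1 p * X12s_10 p) * X12s_10 p = 0.
Proof.
  intros Hp Hm Hf Hs. pose proof Hp as (Hk1&Hk2&Hk3&HD&Hr&Hr'&HS1&HS2).
  destruct (X12_facts p m1 Hp Hm Hf Hs) as [HL [HX [Hc Hu]]].
  destruct (lam1_spec p _ Hf) as [_ EL].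
  assert (Hlt : X11s p < X12s_10 p) by (apply Hu; auto).
  split; auto. split; auto. split; auto. split; [intros x Hx; apply Hu; auto|].
  split; [unfold X11s; field; lra|]. split; auto. split; auto.
  destruct Hc as [Hc0 [_ E]]. rewrite E. field. lra.
Qed.

Lemma u_E10_10 p m1 : params_ok p -> H1 (mu1 p) m1 -> exist_cond p E10_10 -> unique_ss p E10_10.
Proof.
  intros Hp Hm [Hf Hs]. pose proof Hp as (Hk1&Hk2&Hk3&HD&Hr&Hr'&HS1&HS2).
  destruct (E10_common p m1 Hp Hm Hf Hs) as (HX&Hlt&Hc&Hu&EX&EL&HL&E3).
  pose proof Hc as [Hc0 [Hdc _]].
  exists (X11s p), 0, (X12s_10 p), 0. split.
  - unfold_ss. rewrite EX, EL. repeat split; auto; try ring; try lra; try nra; try apply (proj2 (proj2 Hc)).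
  - intros a b c d [_ [_ Fm]]. simpl in Fm. destruct Fm as (->&->&Hc'&->). apply Hu in Hc'. subst. tauto.
Qed.

Lemma u_E10_1 p m1 S2m i : params_ok p -> H1 (mu1 p) m1 -> H2 (mu2 p) S2m ->
  exist_cond p (E10_1 i) -> unique_ss p (E10_1 i).
Proof.
  intros Hp Hm Hm2 [Hf [Hs [Hf2 Hs2]]]. pose proof Hp as (Hk1&Hk2&Hk3&HD&Hr&Hr'&HS1&HS2).
  pose proof (D2_pos p Hp) as HD2.
  destruct (E10_common p m1 Hp Hm Hf Hs) as (HX&Hlt&Hc&Hu&EX&EL&HL&E3).
  destruct (lam2_spec p S2m i (D2 p) Hm2 HD2 Hf2) as [HL2 [EL2 _]].
  pose proof Hc as [Hc0 [Hdc _]].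
  set (c0 := X12s_10 p) in *. set (L2 := lam2 p i (D2 p)) in *.
  set (d0 := (S2in p + k2 p * c0 - L2) / k3 p).
  assert (Hd0 : 0 < d0) by (unfold d0; apply Rdiv_lt_0_compat; lra).
  assert (Ed : S2in p + k2 p * c0 - k3 p * d0 = L2) by (unfold d0; field; lra).
  exists (X11s p), 0, c0, d0. split.
  - unfold_ss. rewrite EX, EL, Ed, EL2. repeat split; auto; try ring; try lra; try nra; try apply (proj2 (proj2 Hc)).
  - intros a b c d [_ [_ Fm]]. simpl in Fm. destruct Fm as (->&->&Hc'&->). apply Hu in Hc'. subst c.
    fold c0 L2 d0. tauto.
Qed.

Lemma E0_01_char p S2m i : params_ok p -> H2 (mu2 p) S2m -> exist_cond p (E0_01 i) ->
  let b0 := (S2in p - lam2 p i (D1 p)) / k3 p in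
  0 < b0 /\ 0 < S2in p + k2 p * 0 - k3 p * b0 /\ (i = i1 -> S2in p + k2 p * 0 - k3 p * b0 <= S2m) /\
  forall a b c d, ss p (E0_01 i) a b c d <-> a = 0 /\ b = b0 /\ c = 0 /\
     (X22_eq p b0 0 d /\ 0 <= d /\ 0 <= S2in p + k2 p * 0 - k3 p * d).
Proof.
  intros Hp Hm [Hf Hs] b0. pose proof Hp as (Hk1&Hk2&Hk3&HD&Hr&Hr'&HS1&HS2).
  pose proof (D1_pos p Hp) as HD1. pose proof (D2_pos p Hp) as HD2.
  destruct (lam2_spec p S2m i (D1 p) Hm HD1 Hf) as [HL [EL Hi1]].
  set (L := lam2 p i (D1 p)) in *.
  assert (HL' : 0 < L).
  { destruct (Rle_lt_or_eq_dec _ _ HL); auto. rewrite <- e in EL. destruct Hm as [_ [H0 _]]. lra. }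
  assert (Hb0 : 0 < b0) by (unfold b0; apply Rdiv_lt_0_compat; lra).
  assert (Eb : S2in p + k2 p * 0 - k3 p * b0 = L) by (unfold b0; field; lra).
  rewrite Eb. split; auto. split; auto. split; auto.
  intros a b c d. unfold_ss. simpl form. fold L. fold b0. split.
  - intros [_ [(Ha&Hb&Hc&Hd&_&_&_&Hdd) (->&->&->&HX)]]. repeat split; auto; apply HX.
  - intros (->&->&->&HX&Hd&Hdd). pose proof HX as [Hdp E].
    rewrite Eb, EL. split; [|split].
    + split; [ring|]. split; [ring|]. split; [ring|]. apply eq4_lemma; auto.
    + repeat split; try lra; try nra.
    + repeat split; auto.
Qed.

Lemma u_E0_01 p S2m : params_ok p -> H2 (mu2 p) S2m -> exist_cond p (E0_01 i1) -> unique_ss p (E0_01 i1).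
Proof.
  intros Hp Hm Hc. destruct (E0_01_char p S2m i1 Hp Hm Hc) as (Hb&HA&Hi&Hch).
  destruct (fam_result _ _ _ _ _ _ Hch) as (_&Hu&_&_).
  destruct (X22_fam p S2m _ 0 Hp Hm Hb HA) as (Hex&Hun&_).
  apply Hu; auto.
Qed.

Lemma E0_012 p S2m : params_ok p -> H2 (mu2 p) S2m -> exist_cond p (E0_01 i2) ->
  some_ss p (E0_01 i2) /\ (generic p (E0_01 i2) -> odd_number_ss p (E0_01 i2)).
Proof.
  intros Hp Hm Hc. destruct (E0_01_char p S2m i2 Hp Hm Hc) as (Hb&HA&Hi&Hch).
  destruct (fam_result _ _ _ _ _ _ Hch) as (Hs&_&Ho&Hg).
  destruct (X22_fam p S2m _ 0 Hp Hm Hb HA) as (Hex&_&Hodd).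
  split; auto.
Qed.

Lemma part3_gen p S2m T a0 b0 c0 : params_ok p -> H2 (mu2 p) S2m -> 0 < b0 ->
  0 < S2in p + k2 p * c0 - k3 p * b0 -> X21s p T = b0 -> X12s p T = c0 ->
  (forall a b c d, ss p T a b c d <-> a = a0 /\ b = b0 /\ c = c0 /\
     (X22_eq p b0 c0 d /\ 0 <= d /\ 0 <= S2in p + k2 p * c0 - k3 p * d)) ->
  (X21s p T > x2m p S2m T -> unique_ss p T) /\
  (X21s p T < x2m p S2m T -> some_ss p T /\ (generic p T -> odd_number_ss p T)).
Proof.
  intros Hp Hm Hb HA E21 E12 Hch. pose proof Hp as (Hk1&Hk2&Hk3&HD&Hr&Hr'&HS1&HS2).
  destruct (fam_result _ _ _ _ _ _ Hch) as (Hs&Hu&Ho&Hg).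
  destruct (X22_fam p S2m _ _ Hp Hm Hb HA) as (Hex&Hun&Hodd).
  unfold x2m. rewrite E21, E12. split.
  - intros Hlt. apply Hu; auto. apply Hun.
    assert (k3 p * ((S2in p + k2 p * c0 - S2m) / k3 p) = S2in p + k2 p * c0 - S2m) by (field; lra).
    nra.
  - intros _. split; auto.
Qed.

Lemma E0_11_part p m1 S2m i : params_ok p -> H1 (mu1 p) m1 -> H2 (mu2 p) S2m -> exist_cond p (E0_11 i) ->
  (X21s p (E0_11 i) > x2m p S2m (E0_11 i) -> unique_ss p (E0_11 i)) /\
  (X21s p (E0_11 i) < x2m p S2m (E0_11 i) -> some_ss p (E0_11 i) /\ (generic p (E0_11 i) -> odd_number_ss p (E0_11 i))).
Proof.
  intros Hp Hm1 Hm [Hf1 [Hs1 [Hf Hs]]]. pose proof Hp as (Hk1&Hk2&Hk3&HD&Hr&Hr'&HS1&HS2).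
  pose proof (D1_pos p Hp) as HD1. pose proof (D2_pos p Hp) as HD2.
  destruct (lam2_spec p S2m i (D1 p) Hm HD1 Hf) as [HL [EL _]].
  destruct (lam1_spec p _ Hf1) as [HL1 EL1].
  set (L := lam2 p i (D1 p)) in *. set (L1 := lam1 p (D2 p)) in *.
  assert (HL' : 0 < L).
  { destruct (Rle_lt_or_eq_dec _ _ HL); auto. rewrite <- e in EL. destruct Hm as [_ [H0 _]]. lra. }
  set (b0 := (S2in p - L) / k3 p). set (c0 := (S1in p - L1) / k1 p).
  assert (Hb0 : 0 < b0) by (unfold b0; apply Rdiv_lt_0_compat; lra).
  assert (Hc0 : 0 < c0) by (unfold c0; apply Rdiv_lt_0_compat; lra).
  assert (Eb : S2in p + k2 p * 0 - k3 p * b0 = L) by (unfold b0; field; lra).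
  assert (Ec : S1in p - k1 p * c0 = L1) by (unfold c0; field; lra).
  apply (part3_gen p S2m _ 0 b0 c0); auto.
  - nra.
  - intros a b c d. unfold_ss. simpl form. fold L L1 b0 c0. split.
    + intros [_ [(Ha&Hb&Hc&Hd&_&_&_&Hdd) (->&->&->&HX)]]. repeat split; auto; apply HX.
    + intros (->&->&->&HX&Hd&Hdd). pose proof HX as [Hdp E].
      rewrite Eb, EL, Ec, EL1. split; [|split].
      * split; [ring|]. split; [ring|]. split; [ring|]. apply eq4_lemma; auto.
      * repeat split; try lra; try nra.
      * repeat split; auto.
Qed.

Lemma E1_11_part p m1 S2m i : params_ok p -> H1 (mu1 p) m1 -> H2 (mu2 p) S2m -> exist_cond p (E1_11 i) ->
  (X21s p (E1_11 i) > x2m p S2m (E1_11 i) -> unique_ss p (E1_11 i)) /\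
  (X21s p (E1_11 i) < x2m p S2m (E1_11 i) -> some_ss p (E1_11 i) /\ (generic p (E1_11 i) -> odd_number_ss p (E1_11 i))).
Proof.
  intros Hp Hm1 Hm [Hf1 [Hf [Hs1 Hs]]]. pose proof Hp as (Hk1&Hk2&Hk3&HD&Hr&Hr'&HS1&HS2).
  pose proof (D1_pos p Hp) as HD1. pose proof (D2_pos p Hp) as HD2.
  destruct (E10_common p m1 Hp Hm1 Hf1 Hs1) as (HXp&Hlt&Hc&Hu&EX&EL1&HL1&E3).
  destruct (lam2_spec p S2m i (D1 p) Hm HD1 Hf) as [HL [EL _]].
  unfold F in Hs. simpl Dlev in Hs.
  set (L := lam2 p i (D1 p)) in *. set (L1 := lam1 p (D1 p)) in *.
  assert (HL' : 0 < L).
  { destruct (Rle_lt_or_eq_dec _ _ HL); auto. rewrite <- e in EL. destruct Hm as [_ [H0 _]]. lra. }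
  set (b0 := k2 p * (S1in p - (L1 + k1 p / k2 p * (L - S2in p))) / (k1 p * k3 p)).
  set (c0 := X12s_10 p) in *. set (a0 := X11s p) in *.
  assert (Hb0 : 0 < b0) by (unfold b0; apply Rdiv_lt_0_compat; [apply Rmult_lt_0_compat|]; nra).
  assert (Ea : a0 = (S1in p - L1) / k1 p) by (unfold a0, X11s; fold L1; auto).
  assert (Eb : S2in p + k2 p * a0 - k3 p * b0 = L) by (rewrite Ea; unfold b0; field; lra).
  pose proof Hc as [Hc0 [Hdc Ec]].
  apply (part3_gen p S2m _ a0 b0 c0); auto.
  - nra.
  - simpl. unfold F. simpl Dlev. fold L L1. auto.
  - intros a b c d. unfold_ss. simpl form. unfold F. simpl Dlev. fold L L1 b0 c0 a0. split.
    + intros [_ [(Ha&Hb&Hc'&Hd&_&_&_&Hdd) (->&->&Hc2&HX)]]. apply Hu in Hc2. fold c0 in Hc2. subst c.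
      repeat split; auto; apply HX.
    + intros (->&->&->&HX&Hd&Hdd). pose proof HX as [Hdp E].
      rewrite Eb, EL, EX, EL1. split; [|split].
      * split; [ring|]. split; [ring|]. split; [exact E3|]. apply eq4_lemma; auto.
      * repeat split; try lra; try nra.
      * repeat split; auto.
Qed.

Theorem proposition3p2 (p : params) (m1 S2m : R)
  (Hp : params_ok p) (Hmu1 : H1 (mu1 p) m1) (Hmu2 : H2 (mu2 p) S2m) :
  (* uniqueness: E_{00}^{kl}, E_{10}^{1l} (k = 0,1; l = 0,1,2) and E_{01}^{01} *)
  (forall T, (T = E00_00 \/ (exists i, T = E00_0 i) \/ T = E00_10 \/
              (exists i, T = E00_1 i) \/ T = E10_10 \/ (exists i, T = E10_1 i) \/
              T = E0_01 i1) ->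
     exist_cond p T -> unique_ss p T) /\
  (* E_{02}^{01}: at least i1, generically an odd number *)
  (exist_cond p (E0_01 i2) ->
     some_ss p (E0_01 i2) /\ (generic p (E0_01 i2) -> odd_number_ss p (E0_01 i2))) /\
  (* E_{0i}^{11}, E_{1i}^{11}, i = 1,2 *)
  (forall (i : idx) T, (T = E0_11 i \/ T = E1_11 i) -> exist_cond p T ->
     (X21s p T > x2m p S2m T -> unique_ss p T) /\
     (X21s p T < x2m p S2m T ->
        some_ss p T /\ (generic p T -> odd_number_ss p T))).
Proof.
  split; [|split].
  - intros T HT Hc.
    destruct HT as [->|[[i ->]|[->|[[i ->]|[->|[[i ->]| ->]]]]]].
    + apply u_E00_00; auto.
    + apply (u_E00_0 p S2m); auto.
    + apply (u_E00_10 p m1); auto.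
    + apply (u_E00_1 p m1 S2m); auto.
    + apply (u_E10_10 p m1); auto.
    + apply (u_E10_1 p m1 S2m); auto.
    + apply (u_E0_01 p S2m); auto.
  - apply (E0_012 p S2m); auto.
  - intros i T [->| ->] Hc.
    + apply (E0_11_part p m1 S2m); auto.
    + apply (E1_11_part p m1 S2m); auto.
Qed.
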